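(* Fix $\alpha\in(0,1)$. In the one-sided weakly dependent Gaussian testing model described in the context, suppose $n_1\to\infty$ and $n_1/n\to p_1\in(0,1]$ as $n\to\infty$, and let $\mu_{n_1}=\max\{\mu_i: i\in\mathcal I_1\}$. If $\lim_{n_1\to\infty}\frac{\sqrt{2\log n_1}}{\mu_{n_1}}$ exists and is strictly less than $1$, then for both the adjusted Bonferroni procedure and the Sidak procedure, $\lim_{n\to\infty}AnyPwr=1$.
   Context: $\Phi$ denotes the standard normal distribution function. Let $(\rho_{ij})_{i,j\ge1}$ be a symmetric array with $\rho_{ii}=1$ and $\rho_{ij}\in(-1,1)$ for $i\ne j$, such that for each $n$ the matrix $\Sigma_n=(\rho_{ij})_{1\le i,j\le n}$ is a valid correlation matrix. Put $\rho_m=\sup_{i\ge1}|\rho_{i,\,i+m}|$ and assume the weak dependence condition: $\gamma:=\sup_{m\ge 1}\rho_m<1$ and $\rho_m=o(1/\log m)$ as $m\to\infty$. For each $n$ one observes $(X_1,\dots,X_n)$, jointly Gaussian with $\mathbb{E}X_i=\mu_i$ (the means may depend on $n$), $\mathrm{Var}(X_i)=1$ and correlation matrix $\Sigma_n$. One tests $H_{0i}:\mu_i=0$ versus $H_{1i}:\mu_i>0$, $i=1,\dots,n$. Let $\mathcal I_1=\{i\le n:\mu_i>0\}$ be the set of false nulls (every $\mu_i$ is either $0$ or positive), $n_1=|\mathcal I_1|$. The adjusted Bonferroni procedure rejects $H_{0i}$ iff $X_i>c_{Bon}(n,\alpha):=\Phi^{-1}\bigl(1-\frac{-\log(1-\alpha)}{n}\bigr)$;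 the Sidak procedure rejects $H_{0i}$ iff $X_i>c_{Sid}(n,\alpha):=\Phi^{-1}\bigl((1-\alpha)^{1/n}\bigr)$. For a procedure with common cutoff $c$, $AnyPwr=\mathbb{P}\bigl(X_i>c\text{ for some }i\in\mathcal I_1\bigr)$, the probability of at least one true rejection. *)

(* Defs.v *)
From HB Require Import structures.
From mathcomp Require Import all_boot all_order all_algebra.
From mathcomp Require Import all_classical all_reals all_analysis.
Set Implicit Arguments. Unset Strict Implicit. Unset Printing Implicit Defensive.
Import Order.TTheory GRing.Theory Num.Theory.
Import numFieldNormedType.Exports.
Local Open Scope classical_set_scope.
Local Open Scope ring_scope.

Section Defs.
Context {R : realType}.

Definition gauss_law (m v : R) : set R -> \bar R :=
  if v == 0 then \d_m else normal_prob m (Num.sqrt v).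

Definition Phi (x : R) : R := fine (normal_prob 0 1 `]-oo, x]).

Definition Phi_inv (q : R) : R := sup [set x : R | Phi x <= q].

Definition c_Bon (n : nat) (alpha : R) : R :=
  Phi_inv (1 - (- ln (1 - alpha)) / n%:R).
Definition c_Sid (n : nat) (alpha : R) : R :=
  Phi_inv ((1 - alpha) `^ (n%:R)^-1).

Definition correlation_array (rho : nat -> nat -> R) : Prop :=
  [/\ forall i j, rho i j = rho j i,
      forall i, rho i i = 1,
      forall i j, i <> j -> -1 < rho i j < 1 &
      forall (n : nat) (a : 'I_n -> R),
        0 <= \sum_(i < n) \sum_(j < n) a i * a j * rho i j].

Definition rho_lag (rho : nat -> nat -> R) (m : nat) : R :=
  sup [set `|rho i (i + m)%N| | i in [set: nat]].

Definition weakly_dependent (rho : nat -> nat -> R) : Prop :=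
  sup [set rho_lag rho m | m in [set m : nat | (1 <= m)%N]] < 1 /\
  (fun m : nat => rho_lag rho m * ln m%:R) @ \oo --> (0 : R).

(** (X_i)_{i<n} is jointly Gaussian with means mu, unit variances and
    correlation (rho_ij): every linear combination sum_i a_i X_i is
    Gaussian with mean sum_i a_i mu_i and variance sum_{i,j} a_i a_j rho_ij. *)
Definition jointly_gaussian d (T : measurableType d) (P : probability T R)
    (n : nat) (X : 'I_n -> {RV P >-> R}) (mu : 'I_n -> R)
    (rho : nat -> nat -> R) : Prop :=
  forall (a : 'I_n -> R) (B : set R), measurable B ->
    P [set t | B (\sum_(i < n) a i * X i t)] =
    gauss_law (\sum_(i < n) a i * mu i)
              (\sum_(i < n) \sum_(j < n) a i * a j * rho i j) B.

Definition false_nulls (n : nat) (mu : 'I_n -> R) : {set 'I_n} :=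
  [set i | 0 < mu i].
Definition n1_of (n : nat) (mu : 'I_n -> R) : nat := #|false_nulls mu|.

Definition mu_max (n : nat) (mu : 'I_n -> R) : R :=
  \big[Order.max/0]_(i in false_nulls mu) mu i.

Definition AnyPwr d (T : measurableType d) (P : probability T R)
    (n : nat) (X : 'I_n -> {RV P >-> R}) (mu : 'I_n -> R) (c : R) : \bar R :=
  P [set t | exists i : 'I_n, i \in false_nulls mu /\ c < X i t].

End Defs.

(* Main.v *)
Require Import Defs.
From HB Require Import structures.
From mathcomp Require Import all_boot all_order all_algebra.
From mathcomp Require Import all_classical all_reals all_analysis.
From mathcomp Require Import lra ring measurable_realfun.
Set Implicit Arguments.
Import Order.TTheory GRing.Theory Num.Theory.
Import numFieldNormedType.Exports.
Local Open Scope classical_set_scope.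
Local Open Scope ring_scope.
Lemma normal_peak1 (R : realType) (s : R) : 0 < s -> normal_peak 1 = s * normal_peak s.
Proof.
move=> s0; rewrite /normal_peak expr1n mul1r -mulrnAr sqrtrM ?sqr_ge0 // sqrtr_sqr gtr0_norm //.
rewrite invfM mulrA divff ?mul1r // gt_eqF //.
Qed.

Lemma normal_tail (R : realType) (m s y : R) : 1 <= s -> 0 <= y ->
  (normal_prob m 1 (~` `](m - y)%R, (m + y)%R[%classic) <= (s * expR (- (1 - s^-2) * y^+2 / 2))%R%:E)%E.
Proof.
move=> s1 y0.
have s0 : 0 < s by lra.
set K := s * _.
have K0 : 0 <= K by rewrite mulr_ge0 ?expR_ge0 ?ltW.
pose I : set R := (~` `]m - y, m + y[%classic).
have mI : measurable I by apply: measurableC; exact: measurable_itv.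
apply: (@le_trans _ _ (\int[lebesgue_measure]_(x in I) ((K * normal_pdf m s x)%:E))%E).
  apply: ge0_le_integral => //.
  - by move=> x _; rewrite lee_fin normal_pdf_ge0.
  - apply/measurable_EFinP; exact: measurable_funTS (measurable_normal_pdf m 1).
  - apply/measurable_EFinP; apply: measurable_funM => //; exact: measurable_funTS (measurable_normal_pdf m s).
  move=> x /= Hx; rewrite lee_fin.
  rewrite /normal_pdf oner_eq0 (negbTE (lt0r_neq0 s0)) (@normal_peak1 _ s s0).
  rewrite /K -!mulrA; apply: ler_wpM2l; first exact: ltW.
  rewrite mulrCA; apply: ler_wpM2l; first exact: normal_peak_ge0.
  rewrite /normal_fun -expRD ler_expR.
  have hy : y <= `|m - x|.
    rewrite leNgt; apply/negP => h; apply: Hx; rewrite /= in_itv /=.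
    by move: h; rewrite ltr_distlC.
  have hu : y ^+ 2 <= (x - m) ^+ 2.
    have e : (x - m) ^+ 2 = `|m - x| ^+ 2 by rewrite real_normK ?num_real // -sqrrN opprB.
    rewrite e; nra.
  have w1 : s^-2 <= 1 by rewrite invf_le1 ?exprn_gt0 // expr_ge1 // ltW.
  have -> : (s ^+ 2 *+ 2)^-1 = s^-2 / 2 by rewrite -mulr_natr invfM.
  rewrite ?expr1n ?mul1r.
  have h : 0 <= (1 - s^-2) * ((x - m)^+2 - y^+2) by apply: mulr_ge0; rewrite subr_ge0.
  nra.
under eq_integral do rewrite EFinM.
rewrite ge0_integralZl_EFin //; last 2 first.
  by move=> x _; rewrite lee_fin normal_pdf_ge0.
  apply: measurable_funTS; apply/measurable_EFinP; exact: measurable_normal_pdf.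
rewrite -[X in (_ <= X)%E]mule1; apply: lee_wpmul2l; first by rewrite lee_fin.
exact: (@probability_le1 _ _ _ (normal_prob m s)).
Qed.
Lemma normal_inner (R : realType) (m s y : R) (S : set R) : 1 <= s -> 0 <= y ->
  measurable S -> `](m - y), (m + y)[%classic `<=` S ->
  ((1 - s * expR (- (1 - s^-2) * y^+2 / 2))%:E <= normal_prob m 1 S)%E.
Proof.
move=> s1 y0 mS sub.
have h := @normal_tail R m s y s1 y0.
have mB : measurable (`](m - y), (m + y)[%classic : set R) by exact: measurable_itv.
apply: (@le_trans _ _ (normal_prob m 1 `](m - y), (m + y)[%classic)).
  rewrite -[X in (_ <= normal_prob m 1 X)%E]setCK probability_setC; last exact: measurableC.
  by rewrite EFinB; apply: leeB.
by apply: le_measure; rewrite ?inE.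
Qed.

Lemma Phi_ge (R : realType) (s z x : R) : 1 <= s -> 0 <= z -> z <= x ->
  1 - s * expR (- (1 - s^-2) * z^+2 / 2) <= Phi x.
Proof.
move=> s1 z0 zx.
have mA : measurable (`]-oo, x]%classic : set R) by exact: measurable_itv.
have fin : normal_prob 0 1 `]-oo, x] \is a fin_num.
  rewrite ge0_fin_numE; last exact: measure_ge0.
  apply: (le_lt_trans (@probability_le1 _ _ _ (normal_prob 0 1) _ mA)); exact: ltry.
rewrite /Phi -lee_fin fineK //.
apply: normal_inner => // t /=; rewrite !in_itv /= => /andP[_ tz].
by rewrite add0r in tz; apply: (ltW (lt_le_trans tz zx)).
Qed.

Lemma Phi_inv_le (R : realType) (s z q : R) : 1 <= s -> 0 <= z ->
  s * expR (- (1 - s^-2) * z^+2 / 2) < 1 - q -> Phi_inv q <= z.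
Proof.
move=> s1 z0 hK; rewrite /Phi_inv.
have [->|/set0P ne] := eqVneq [set x : R | Phi x <= q] set0; first by rewrite sup0.
apply: ge_sup => // x /= hx; rewrite leNgt; apply/negP => zx.
have := @Phi_ge R s z x s1 z0 (ltW zx); lra.
Qed.

Lemma sum_delta (R : realType) n (i : 'I_n) (F : 'I_n -> R) :
  \sum_(j < n) (j == i)%:R * F j = F i.
Proof.
rewrite (bigD1 i) //= eqxx mul1r big1 ?addr0 // => j /negbTE ->; by rewrite mul0r.
Qed.

Lemma anypwr_lb (R : realType) d (T : measurableType d) (P : probability T R) n
  (X : 'I_n -> {RV P >-> R}) (mu : 'I_n -> R) (rho : nat -> nat -> R) (i : 'I_n) (c y s : R) :
  correlation_array rho -> jointly_gaussian X mu rho -> i \in false_nulls mu ->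
  1 <= s -> 0 <= y -> c <= mu i - y ->
  ((1 - s * expR (- (1 - s^-2) * y^+2 / 2))%:E <= AnyPwr X mu c)%E.
Proof.
move=> [_ rho1 _ _] JG iF s1 y0 cy.
have mB : measurable (`]c, +oo[%classic : set R) by exact: measurable_itv.
have := JG (fun j => (j == i)%:R) _ mB.
under eq_set do rewrite sum_delta.
rewrite sum_delta.
have -> : \sum_(i0 < n) \sum_(j < n) (i0 == i)%:R * (j == i)%:R * rho i0 j = rho i i.
  transitivity (\sum_(i0 < n) (i0 == i)%:R * rho i0 i); last exact: sum_delta.
  apply: eq_bigr => i0 _; rewrite -(@sum_delta R n i (fun j => (i0 == i)%:R * rho i0 j)).
  by apply: eq_bigr => j _; rewrite mulrCA mulrA.
rewrite rho1 /gauss_law oner_eq0 sqrtr1 => hP.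
apply: (@le_trans _ _ (P [set t | `]c, +oo[%classic (X i t)])).
  rewrite hP; apply: normal_inner => // t /=; rewrite !in_itv /= => /andP[ht _].
  by rewrite andbT; apply: le_lt_trans ht.
apply: le_measure; rewrite ?inE //.
- by have := measurable_funPTI (X i) mB.
- have -> : [set t | exists j : 'I_n, j \in false_nulls mu /\ c < X j t] =
     \bigcup_(j in [set j | j \in false_nulls mu]) (X j @^-1` `]c, +oo[%classic).
    apply/seteqP; split => t /=.
      by move=> [j [jF ct]]; exists j => //=; rewrite in_itv /= ct.
    by move=> [j jF]; rewrite /= in_itv /= andbT => ct; exists j.
  apply: fin_bigcup_measurable; first exact: finite_finset.
  move=> j _; exact: measurable_funPTI.
- move=> t /=; rewrite in_itv /= andbT => ct; exists i; split => //.
Qed.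
Lemma key_ineq (R : realType) (b s t p1 Y M m1 n C : R) :
  ln (2 * s / (p1 * t)) <= C -> 0 <= C ->
  0 < b -> b < 1 -> s^-2 = (1 - b^+2) / 2 -> 1 <= s -> 0 < t -> 0 < p1 -> 0 <= Y ->
  0 < n -> 1 <= m1 -> p1 / 2 < m1 / n -> Num.sqrt (2 * ln m1) / M < b -> 1 <= M ->
  4 * Y + 4 * C <= (1 - b^+2) * M ->
  0 <= M - Y /\ s * expR (- (1 - s^-2) * (M - Y)^+2 / 2) < t / n.
Proof.
move=> lW C0 b0 b1 hs s1 t0 p0 Y0 n0 m11 hp hr M1 hM.
have s0 : 0 < s by lra.
have M0 : 0 < M by lra.
have bb : b^+2 < 1 by nra.
have b20 : 0 <= b^+2 by nra.
split.
  have : 0 <= b^+2 * M by rewrite mulr_ge0 // ltW.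
  move=> h; lra.
have lnm0 : 0 <= ln m1 by rewrite ln_ge0.
have hsq : 2 * ln m1 < b^+2 * M^+2.
  move: hr; rewrite ltr_pdivrMr // => hr.
  have r0 : 0 <= Num.sqrt (2 * ln m1) by [].
  have r2 : Num.sqrt (2 * ln m1) ^+ 2 = 2 * ln m1 by rewrite sqr_sqrtr // mulr_ge0.
  nra.
have hn : p1 * n < 2 * m1.
  by move: hp; rewrite ltr_pdivlMr //; lra.
pose x := s * n / t.
pose W := 2 * s / (p1 * t).
have x0 : 0 < x by rewrite /x divr_gt0 // mulr_gt0.
have W0 : 0 < W by rewrite /W divr_gt0 ?mulr_gt0.
have m10 : 0 < m1 by lra.
have xW : x < W * m1.
  rewrite -subr_gt0.
  have -> : W * m1 - x = s / (t * p1) * (2 * m1 - p1 * n).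
    by rewrite /W /x; field; rewrite ?lt0r_neq0.
  by rewrite mulr_gt0 ?divr_gt0 ?mulr_gt0 // subr_gt0.
have lx : ln x < ln W + ln m1.
  by rewrite -lnM ?posrE // ltr_ln ?posrE // mulr_gt0.
have main : ln x < (1 - s^-2) * (M - Y) ^+ 2 / 2.
  rewrite hs.
  have h1 : (4 * Y + 4 * C) * M <= (1 - b^+2) * M * M by rewrite ler_wpM2r // ltW.
  have h2 : C <= C * M by rewrite ler_peMr.
  have h3 : b^+2 * (M * Y) <= M * Y by have := mulr_ge0 (ltW M0) Y0; nra.
  nra.
have : expR (- (1 - s^-2) * (M - Y)^+2 / 2) < expR (- ln x).
  by rewrite ltr_expR; lra.
rewrite -lnV ?posrE // lnK ?posrE ?invr_gt0 // /x => h.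
have -> : t / n = s * (s * n / t)^-1 by field; rewrite ?lt0r_neq0.
by rewrite ltr_pM2l.
Qed.

Lemma mu_max_attained (R : realType) n (mu : 'I_n -> R) :
  (0 < n1_of mu)%N -> exists2 i, i \in false_nulls mu & mu_max mu = mu i.
Proof.
move=> /card_gt0P [j jF]; rewrite /mu_max.
have [|i iF ->] := @eq_bigmax _ R _ 0 j (fun i => i \in false_nulls mu) mu jF.
  by move=> i; rewrite inE => /ltW.
by exists i.
Qed.

Lemma anypwr_bounds (R : realType) d (T : measurableType d) (P : probability T R) n
  (X : 'I_n -> {RV P >-> R}) (mu : 'I_n -> R) (c : R) :
  (0 <= AnyPwr X mu c)%E /\ (AnyPwr X mu c <= 1)%E.
Proof.
split; first exact: measure_ge0.
apply: probability_le1.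
have -> : [set t | exists j : 'I_n, j \in false_nulls mu /\ c < X j t] =
     \bigcup_(j in [set j | j \in false_nulls mu]) (X j @^-1` `]c, +oo[%classic).
  apply/seteqP; split => t /=.
    by move=> [j [jF ct]]; exists j => //=; rewrite in_itv /= ct.
  by move=> [j jF]; rewrite /= in_itv /= andbT => ct; exists j.
apply: fin_bigcup_measurable; first exact: finite_finset.
move=> j _; apply: measurable_funPTI; exact: measurable_itv.
Qed.

Lemma K_small (R : realType) (b s eps : R) :
  0 < b -> b < 1 -> s^-2 = (1 - b^+2) / 2 -> 1 <= s -> 0 < eps ->
  s * expR (- (1 - s^-2) * (4 * s / eps + 1)^+2 / 2) <= eps.
Proof.
move=> b0 b1 hs s1 e0.
set Y := 4 * s / eps + 1.
have s0 : 0 < s by lra.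
have Y1 : 1 <= Y by rewrite /Y lerDr divr_ge0 // ?mulr_ge0 // ltW.
have eY : eps * Y = 4 * s + eps by rewrite /Y; field; rewrite lt0r_neq0.
set v := (1 - s^-2) * Y^+2 / 2.
have hv : Y / 4 <= v.
  rewrite /v hs.
  have b20 : 0 <= b^+2 by nra.
  have : Y <= Y^+2 by nra.
  nra.
rewrite mulNr mulNr -/v expRN.
rewrite ler_pdivrMr ?expR_gt0 //.
have := expR_ge1Dx v => hx.
have : eps * (1 + v) <= eps * expR v by rewrite ler_wpM2l // ltW.
have : eps * (Y / 4) <= eps * v by rewrite ler_wpM2l // ltW.
nra.
Qed.

Lemma main_gen (R : realType) (rho : nat -> nat -> R)
    (d : nat -> measure_display) (T : forall n, measurableType (d n))
    (P : forall n, probability (T n) R)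
    (mu : forall n, 'I_n -> R)
    (X : forall n, 'I_n -> {RV (P n) >-> R}) (p1 t : R) (q : nat -> R) :
  correlation_array rho ->
  (forall n, jointly_gaussian (X n) (mu n) rho) ->
  (fun n => (n1_of (mu n))%:R : R) @ \oo --> +oo ->
  0 < p1 ->
  (fun n => (n1_of (mu n))%:R / n%:R : R) @ \oo --> p1 ->
  (exists2 L : R, L < 1 &
     (fun n => Num.sqrt (2 * ln (n1_of (mu n))%:R) / mu_max (mu n))
       @ \oo --> L) ->
  0 < t -> (forall n, (0 < n)%N -> t / n%:R <= 1 - q n) ->
  (fun n => AnyPwr (X n) (mu n) (Phi_inv (q n))) @ \oo --> 1%E.
Proof.
move=> rhoC JG n1oo p10 n1p [L L1 rat] t0 hq.
pose L0 := Num.max L 0.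
have hL0 : L <= L0 by rewrite /L0 le_max lexx.
have hL0' : 0 <= L0 by rewrite /L0 le_max lexx orbT.
have hL1 : L0 < 1 by rewrite /L0 gt_max L1 ltr01.
pose b := (L0 + 1) / 2.
have b0 : 0 < b by rewrite /b; lra.
have b1 : b < 1 by rewrite /b; lra.
have Lb : L < b by rewrite /b; lra.
have bb : b^+2 < 1 by nra.
have b20 : 0 <= b^+2 by nra.
have w0 : 0 < 1 - b^+2 by lra.
pose s := Num.sqrt (2 / (1 - b^+2)).
have s2 : s^+2 = 2 / (1 - b^+2) by rewrite sqr_sqrtr // divr_ge0 // ltW.
have hs : s^-2 = (1 - b^+2) / 2 by rewrite s2 invf_div.
have s1 : 1 <= s.
  have sge : 0 <= s := sqrtr_ge0 _.
  have : 1 <= s^+2 by rewrite s2 ler_pdivlMr //; lra.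
  nra.
apply: cvg_EFin.
  apply: nearW => n.
  have [h0 h1] := @anypwr_bounds R _ _ (P n) n (X n) (mu n) (Phi_inv (q n)).
  by rewrite ge0_fin_numE // (le_lt_trans h1) // ltry.
apply/cvgrPdist_le => eps eps0.
pose Y := 4 * s / eps + 1.
have s0 : 0 < s by lra.
have Y1 : 1 <= Y by rewrite /Y lerDr divr_ge0 // ?mulr_ge0 // ltW.
pose C := `|ln (2 * s / (p1 * t))|.
have C0 : 0 <= C := normr_ge0 _.
have lW : ln (2 * s / (p1 * t)) <= C := ler_norm _.
pose M0 := Num.max 1 ((4 * Y + 4 * C) / (1 - b^+2)).
have M01 : 1 <= M0 by rewrite /M0 le_max lexx.
have M02 : (4 * Y + 4 * C) / (1 - b^+2) <= M0 by rewrite /M0 le_max lexx orbT.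
move: (n1oo) => /cvgryPge /(_ (expR (M0^+2 / 2))) hn1.
move: (rat) => /cvgr_lt /(_ b Lb) hr.
have p1h : p1 / 2 < p1 by lra.
move: (n1p) => /cvgr_gt /(_ _ p1h) hp.
near=> n.
have N1 : expR (M0^+2 / 2) <= (n1_of (mu n))%:R by near: n; apply: hn1.
have R1 : Num.sqrt (2 * ln (n1_of (mu n))%:R) / mu_max (mu n) < b by near: n; apply: hr.
have P1 : p1 / 2 < (n1_of (mu n))%:R / n%:R by near: n; apply: hp.
move: N1 R1 P1; set m1 := n1_of (mu n) => N1 R1 P1.
have m1pos : (0 < m1)%N by rewrite -(ltr0n R); apply: lt_le_trans N1; exact: expR_gt0.
have [i iF hmax] := @mu_max_attained R n (mu n) m1pos.
have Mpos : 0 < mu n i by move: iF; rewrite inE.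
have m1n : (m1 <= n)%N by rewrite /m1 /n1_of -[X in (_ <= X)%N]card_ord; exact: max_card.
have npos : (0 < n)%N by apply: leq_trans m1n.
have npos' : (0 : R) < n%:R by rewrite ltr0n.
have m11 : (1 : R) <= m1%:R by rewrite ler1n.
have lnm : M0^+2 / 2 <= ln m1%:R.
  by rewrite -[M0^+2 / 2]expRK ler_ln ?posrE ?expR_gt0 // (lt_le_trans _ m11).
rewrite hmax in R1.
have MM0 : M0 <= mu n i.
  have r0 : 0 <= Num.sqrt (2 * ln (m1%:R : R)) := sqrtr_ge0 _.
  have r2 : Num.sqrt (2 * ln (m1%:R : R)) ^+ 2 = 2 * ln m1%:R.
    by rewrite sqr_sqrtr // mulr_ge0 // (le_trans _ lnm) // divr_ge0 // sqr_ge0.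
  move: R1; rewrite ltr_pdivrMr // => R1.
  nra.
have hM : 4 * Y + 4 * C <= (1 - b^+2) * mu n i.
  by rewrite -ler_pdivrMl // mulrC; apply: le_trans M02 MM0.
have [hMY hK] := @key_ineq R _ _ _ _ _ _ _ _ _ lW C0 b0 b1 hs s1 t0 p10 (ltW (lt_le_trans ltr01 Y1)) npos' m11 P1 R1
   (le_trans M01 MM0) hM.
have hc : Phi_inv (q n) <= mu n i - Y.
  by apply: Phi_inv_le s1 hMY _; apply: lt_le_trans hK (hq n npos).
have hc' : Phi_inv (q n) <= mu n i - Y by [].
have lb := @anypwr_lb R _ _ (P n) n (X n) (mu n) rho i (Phi_inv (q n)) Y s rhoC (JG n) iF s1 (ltW (lt_le_trans ltr01 Y1)) hc'.
have [h0 h1] := @anypwr_bounds R _ _ (P n) n (X n) (mu n) (Phi_inv (q n)).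
have fin : AnyPwr (X n) (mu n) (Phi_inv (q n)) \is a fin_num.
  by rewrite ge0_fin_numE // (le_lt_trans h1) // ltry.
move: lb h1; rewrite -(fineK fin) !lee_fin => lb h1 /=.
have := @K_small R b s eps b0 b1 hs s1 eps0.
rewrite -/Y => hKs.
rewrite ger0_norm ?subr_ge0 //; lra.
Unshelve. all: by end_near.
Qed.

Lemma sid_gap (R : realType) (alpha : R) (n : nat) : 0 < alpha < 1 -> (0 < n)%N ->
  (1 - alpha) * (- ln (1 - alpha)) / n%:R <= 1 - (1 - alpha) `^ (n%:R)^-1.
Proof.
move=> /andP[a0 a1] n0.
have b0 : 0 < 1 - alpha by lra.
have l0 : ln (1 - alpha) < 0 by rewrite ln_lt0 // b0 /=; lra.
have n0' : (0 : R) < n%:R by rewrite ltr0n.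
have n1 : (1 : R) <= n%:R by rewrite ler1n.
rewrite /powR (negbTE (lt0r_neq0 b0)).
set u := (n%:R)^-1 * - ln (1 - alpha).
have -> : (n%:R)^-1 * ln (1 - alpha) = - u by rewrite /u mulrN opprK.
have -> : (1 - alpha) * - ln (1 - alpha) / n%:R = (1 - alpha) * u by rewrite /u mulrCA mulrC.
have ni1 : (n%:R : R)^-1 <= 1 by rewrite invf_le1.
have ni0 : (0 : R) < (n%:R)^-1 by rewrite invr_gt0.
have u0 : 0 <= u by rewrite /u mulr_ge0 // ?ltW //; lra.
have uL : u <= - ln (1 - alpha).
  rewrite /u -[X in _ <= X]mul1r ler_wpM2r //; lra.
have e1 : 1 - alpha <= expR (- u).
  by rewrite -[X in X <= _]lnK ?posrE // ler_expR; lra.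
have e2 := expR_ge1Dx u.
have e3 := expRxMexpNx_1 u.
have e4 : 0 < expR (- u) := expR_gt0 _.
nra.
Qed.

Unset Implicit Arguments.

Theorem theorem4p1 (R : realType) (alpha : R) (rho : nat -> nat -> R)
    (d : nat -> measure_display) (T : forall n, measurableType (d n))
    (P : forall n, probability (T n) R)
    (mu : forall n, 'I_n -> R)
    (X : forall n, 'I_n -> {RV (P n) >-> R}) (p1 : R) :
  0 < alpha < 1 ->
  correlation_array rho ->
  weakly_dependent rho ->
  (forall n (i : 'I_n), 0 <= mu n i) ->
  (forall n, jointly_gaussian (X n) (mu n) rho) ->
  (fun n => (n1_of (mu n))%:R : R) @ \oo --> +oo ->
  0 < p1 <= 1 ->
  (fun n => (n1_of (mu n))%:R / n%:R : R) @ \oo --> p1 ->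
  (exists2 L : R, L < 1 &
     (fun n => Num.sqrt (2 * ln (n1_of (mu n))%:R) / mu_max (mu n))
       @ \oo --> L) ->
  (fun n => AnyPwr (X n) (mu n) (c_Bon n alpha)) @ \oo --> 1%E /\
  (fun n => AnyPwr (X n) (mu n) (c_Sid n alpha)) @ \oo --> 1%E.
Proof.
move=> ha rhoC _ _ JG n1oo /andP[p10 _] n1p hL.
have /andP[a0 a1] := ha.
have b0 : 0 < 1 - alpha by lra.
have l0 : ln (1 - alpha) < 0 by rewrite ln_lt0 // b0 /=; lra.
have t0 : 0 < - ln (1 - alpha) by rewrite oppr_gt0.
split.
  apply: (@main_gen R rho d T P mu X p1 (- ln (1 - alpha))
            (fun n => 1 - (- ln (1 - alpha)) / n%:R)) => // n _.
  lra.
apply: (@main_gen R rho d T P mu X p1 ((1 - alpha) * (- ln (1 - alpha)))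
          (fun n => (1 - alpha) `^ (n%:R)^-1)) => //.
  by rewrite mulr_gt0.
move=> n n0; exact: sid_gap.
Qed.
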